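(* For all integers $n,\ell\geq 3$ the shift hypergraph $\mathrm{Sh}^{(3)}(n,\ell)$ is $K_4^{(3)-}$-free, i.e. no four of its vertices span three or more edges.
   Context: For integers $n,\ell\geq k\geq 2$ the $k$-uniform shift hypergraph $\mathrm{Sh}^{(k)}(n,\ell)$ has as vertex set the family of all $\ell$-element subsets of $[n]=\{1,\dots,n\}$, and for every increasing sequence $a_1<\dots<a_{k+\ell-1}$ of integers from $[n]$ it has the edge $\{x_1,\dots,x_k\}$ where $x_i=\{a_i,a_{i+1},\dots,a_{i+\ell-1}\}$ for $i\in[k]$; these are all its edges. $K_4^{(3)-}$ denotes the $3$-uniform hypergraph with four vertices and three edges. *)

(* Defs.v *)
From mathcomp Require Import all_boot all_order.
Set Implicit Arguments. Unset Strict Implicit. Unset Printing Implicit Defensive.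

(* The ground set [n] = {1,...,n} is represented by 'I_n = {0,...,n-1}
   (order-preserving relabelling i |-> i-1).  Vertices of Sh^(k)(n,l) are
   l-element subsets of 'I_n, i.e. elements of {set 'I_n} of cardinality l. *)

(* x_i = {a_i, ..., a_(i+l-1)} (0-indexed here: i : 'I_k, positions i..i+l-1). *)
Definition shift_vertex n l k (a : 'I_(k + l - 1) -> 'I_n) (i : 'I_k) : {set 'I_n} :=
  [set a j | j : 'I_(k + l - 1) & (i <= j < i + l)%N].

Definition shift_edge n l k (e : {set {set 'I_n}}) : Prop :=
  exists a : 'I_(k + l - 1) -> 'I_n,
    (forall i j : 'I_(k + l - 1), (i < j)%N -> (a i < a j)%N) /\
    e = [set shift_vertex a i | i : 'I_k].

Definition K4minus_free_shift n l : Prop :=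
  forall S : {set {set 'I_n}},
    #|S| = 4 ->
    (forall x, x \in S -> #|x| = l) ->
    ~ exists E : {set {set {set 'I_n}}},
        3 <= #|E| /\
        (forall e, e \in E -> shift_edge l 3 e /\ e \subset S).

(* Main.v *)
Require Import Defs.
From mathcomp Require Import all_boot all_order.
From mathcomp Require Import zify.
Set Implicit Arguments. Unset Strict Implicit. Unset Printing Implicit Defensive.

Lemma card3s (T : finType) (x y z : T) : x != y -> x != z -> y != z -> #|[set x; y; z]| = 3.
Proof.
move=> xy xz yz. have -> : [set x; y; z] = x |: [set y; z] by apply/setP => u; rewrite !inE orbA.
by rewrite cardsU1 cards2 yz !inE negb_or xy xz.
Qed.

Section Abs.
Variables (T : finType) (f : T -> nat) (R : T -> T -> Prop).

Definition ord3 x y z := f x < f y /\ f y < f z /\ R x y /\ R y z /\ ~ R x z.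
Definition good (e : {set T}) := exists x y z, e = [set x; y; z] /\ ord3 x y z.
Definition P3 A B C := ord3 A B C \/ ord3 A C B \/ ord3 B A C \/ ord3 B C A \/ ord3 C A B \/ ord3 C B A.

Lemma P3_of e A B C : good e -> (forall X, X \in e -> X = A \/ X = B \/ X = C) -> P3 A B C.
Proof.
move=> [x [y [z [-> H]]]] Hm.
have : x = A \/ x = B \/ x = C by apply: Hm; rewrite !inE eqxx.
have : y = A \/ y = B \/ y = C by apply: Hm; rewrite !inE eqxx !orbT.
have : z = A \/ z = B \/ z = C by apply: Hm; rewrite !inE eqxx !orbT.
move: H; rewrite /P3 /ord3.
move=> H [?|[?|?]] [?|[?|?]] [?|[?|?]]; subst; tauto || lia.
Qed.

Lemma P3_final A B C D : P3 A C D -> P3 A B D -> P3 A B C -> False.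
Proof. rewrite /P3 /ord3. intuition lia. Qed.

Lemma good_card e : good e -> #|e| = 3.
Proof.
move=> [x [y [z [-> [H1 [H2 _]]]]]]; apply: card3s; apply/eqP => E; subst; lia.
Qed.

Lemma noK4 (S : {set T}) (E : {set {set T}}) :
  #|S| = 4 -> 3 <= #|E| -> (forall e, e \in E -> good e /\ e \subset S) -> False.
Proof.
move=> cS cE HE.
have miss : forall e, e \in E -> exists m, m \in S /\ forall X, (X \in e) = (X \in S) && (X != m).
  move=> e /HE [g sub].
  have : #|S :\: e| == 1 by rewrite cardsDS // cS good_card.
  case/cards1P => m Hm.
  have mS : m \in S.
    have : m \in S :\: e by rewrite Hm set11.
    by rewrite inE => /andP[].
  exists m; split => // X.
  have : (X \in S :\: e) = (X \in [set m]) by rewrite Hm. rewrite !inE.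
  case Xe: (X \in e) => /=.
    by rewrite (subsetP sub X Xe) => /= <-.
  by move=> ->; case: (X == m).
have [e1 e1E] : exists e1, e1 \in E by apply/card_gt0P; lia.
have [e2 e2E] : exists e2, e2 \in E :\ e1 by apply/card_gt0P; move: cE; rewrite (cardsD1 e1) e1E; lia.
have [e3 e3E] : exists e3, e3 \in E :\ e1 :\ e2.
  apply/card_gt0P; move: cE; rewrite (cardsD1 e1 E) e1E (cardsD1 e2 (E :\ e1)) e2E; lia.
move: e2E e3E; rewrite !inE => /andP [ne21 e2E] /andP [ne32 /andP [ne31 e3E]].
have [m1 [m1S H1]] := miss _ e1E.
have [m2 [m2S H2]] := miss _ e2E.
have [m3 [m3S H3]] := miss _ e3E.
have neq : forall (a b : T) (ea eb : {set T}), (forall X, (X \in ea) = (X \in S) && (X != a)) ->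
    (forall X, (X \in eb) = (X \in S) && (X != b)) -> ea != eb -> a != b.
  move=> a b ea eb Ha Hb; apply: contra => /eqP ab; apply/eqP/setP => X; by rewrite Ha Hb ab.
have n12 := neq _ _ _ _ H2 H1 ne21.
have n13 := neq _ _ _ _ H3 H1 ne31.
have n23 := neq _ _ _ _ H3 H2 ne32.
have : #|S :\: [set m2; m1; m3]| == 1.
  have sub3 : [set m2; m1; m3] \subset S.
    by apply/subsetP => X; rewrite !inE; case/orP => [/orP [] | ] /eqP ->.
  by rewrite cardsDS // card3s // ?cS // eq_sym.
case/cards1P => A HA.
have inS : forall X, X \in S -> X = A \/ X = m1 \/ X = m2 \/ X = m3.
  move=> X XS. have : (X \in S :\: [set m2; m1; m3]) = (X \in [set A]) by rewrite HA. rewrite !inE XS /=.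
  case: eqP; first by auto.
  case: eqP; first by auto.
  case: eqP; first by auto.
  by move=> _ _ _ /= /esym /eqP ->; left.
have P1 : P3 A m2 m3.
  apply: (P3_of (e := e1)); first by case: (HE _ e1E).
  move=> X; rewrite H1 => /andP [XS Xm]; case: (inS X XS); first by auto.
  case => [E1|]; first by rewrite E1 eqxx in Xm. by auto.
have P2 : P3 A m1 m3.
  apply: (P3_of (e := e2)); first by case: (HE _ e2E).
  move=> X; rewrite H2 => /andP [XS Xm]; case: (inS X XS); first by auto.
  case => [|[E1|]]; [by auto| by rewrite E1 eqxx in Xm | by auto].
have P4 : P3 A m1 m2.
  apply: (P3_of (e := e3)); first by case: (HE _ e3E).
  move=> X; rewrite H3 => /andP [XS Xm]; case: (inS X XS); first by auto.
  case => [|[|E1]]; [by auto| by auto | by rewrite E1 eqxx in Xm].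
exact: (P3_final P1 P2 P4).
Qed.
End Abs.

Section Conc.
Variables (n l : nat) (a : 'I_(3 + l - 1) -> 'I_n).
Hypothesis mono : forall i j : 'I_(3 + l - 1), (i < j)%N -> (a i < a j)%N.
Hypothesis hl : 3 <= l.

Definition sig (X : {set 'I_n}) := \sum_(u in X) (u : nat).
Definition Rr (X Y : {set 'I_n}) := forall u v, u \in X :\: Y -> v \in X :\: Y -> u = v.
Definition Vn (i : nat) := [set a j | j : 'I_(3 + l - 1) & (i <= j < i + l)].

Lemma ainj i j : a i = a j -> i = j.
Proof.
move=> E; apply: val_inj => /=; case: (ltngtP i j) => // H.
  by have := mono H; rewrite E ltnn.
by have := mono H; rewrite E ltnn.
Qed.

Lemma memV u i : u \in Vn i <-> exists j : 'I_(3 + l - 1), i <= j < i + l /\ u = a j.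
Proof.
split.
  by case/imsetP => j; rewrite inE => H ->; exists j.
by case=> j [H ->]; apply/imsetP; exists j; rewrite ?inE.
Qed.

Lemma aV i (j : 'I_(3 + l - 1)) : i <= j < i + l -> a j \in Vn i.
Proof. by move=> H; apply/memV; exists j. Qed.

Lemma notaV i (j : 'I_(3 + l - 1)) : ~~ (i <= j < i + l) -> a j \notin Vn i.
Proof.
move=> H; apply/negP => /memV [k [Hk E]]; move/ainj: E => E; subst k.
by rewrite Hk in H.
Qed.

Lemma sig_lt i : i <= 1 -> sig (Vn i) < sig (Vn i.+1).
Proof.
move=> hi.
have hp : i < 3 + l - 1 by lia.
have hq : i + l < 3 + l - 1 by lia.
pose p := Ordinal hp. pose q := Ordinal hq.
rewrite /sig (bigD1 (a p)) /=; last by apply: aV; rewrite /p /=; lia.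
rewrite [X in _ < X](bigD1 (a q)) /=; last by apply: aV; rewrite /q /=; lia.
have -> : \sum_(u in Vn i | u != a p) (u : nat) = \sum_(u in Vn i.+1 | u != a q) (u : nat).
  apply: eq_bigl => u; apply/andP/andP.
    case=> /memV [j [Hj ->]] Hne; split.
      apply: aV; apply/andP; split; last by lia.
      case/andP: Hj => H1 _; rewrite ltn_neqAle H1 andbT; apply/negP => /eqP E.
      have jp : j = p by apply: val_inj; rewrite /p /= E.
      by rewrite jp eqxx in Hne.
    apply/negP => /eqP /ainj E; subst j; move: Hj; rewrite /p /q /=; lia.
  case=> /memV [j [Hj ->]] Hne; split.
    apply: aV; apply/andP; split; first by lia.
    case/andP: Hj => _ H1; rewrite ltn_neqAle.
    apply/andP; split; last by lia.
    apply/negP => /eqP E.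
    have jq : j = q by apply: val_inj; rewrite /q /= E.
    by rewrite jq eqxx in Hne.
  apply/negP => /eqP /ainj E; subst j; move: Hj; rewrite /p /q /=; lia.
have : (a p < a q)%N by apply: mono; rewrite /p /q /=; lia.
by move=> H; rewrite ltn_add2r.
Qed.

Lemma R_cons i : Rr (Vn i) (Vn i.+1).
Proof.
have key : forall u, u \in Vn i :\: Vn i.+1 -> exists j : 'I_(3 + l - 1), val j = i /\ u = a j.
  move=> u; rewrite inE => /andP [Hn /memV [j [Hj E]]]; exists j; split => //.
  subst u; apply/eqP; rewrite eqn_leq; case/andP: Hj => -> H2; rewrite andbT.
  apply/negPn/negP; rewrite -ltnNge => H3.
  by move: Hn; rewrite aV // H3 /=; lia.
move=> u v /key [j [Hj ->]] /key [k [Hk ->]].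
by congr (a _); apply: val_inj; rewrite /= Hj Hk.
Qed.

Lemma R_out : ~ Rr (Vn 0) (Vn 2).
Proof.
have h0 : 0 < 3 + l - 1 by lia.
have h1 : 1 < 3 + l - 1 by lia.
move=> HR.
have E := HR (a (Ordinal h0)) (a (Ordinal h1)).
have : Ordinal h0 = Ordinal h1.
  apply: ainj; apply: E; rewrite inE; apply/andP; split;
  (try by apply: notaV => /=);
  by apply: aV => /=; lia.
by move/(congr1 val).
Qed.

End Conc.

Theorem lemma3p4 (n l : nat) : 3 <= n -> 3 <= l -> K4minus_free_shift n l.
Proof.
move=> hn hl S cS Sl [E [cE HE]].
apply: (@noK4 _ (@sig n) (@Rr n) S E cS cE).
move=> e /HE [[a [mono ->]] sub]; split => //.
exists (Vn a 0), (Vn a 1), (Vn a 2); split.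
  apply/setP => X; rewrite !inE; apply/imsetP/idP.
    case=> [[[|[|[|k]]] hk]] _ -> //=.
    - by rewrite eqxx.
    - by rewrite eqxx orbT.
    - by rewrite eqxx !orbT.
  case/orP => [/orP [] | ] /eqP ->.
  - by exists (Ordinal (isT : 0 < 3)).
  - by exists (Ordinal (isT : 1 < 3)).
  - by exists (Ordinal (isT : 2 < 3)).
split; first exact: sig_lt.
split; first exact: sig_lt.
split; first exact: R_cons.
split; first exact: R_cons.
exact: R_out.
Qed.
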